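(* Let $C_{BZ}\subset V_{BZ}$ be the cone of BZ labellings with all nine coordinates nonnegative. Then $C_{BZ}$ has exactly eight extreme rays, spanned by the eight fundamental BZ triangles $\hat C_1,\hat C_2,\hat C_3,\hat D_1,\hat D_3,\hat D_5,\hat P,\hat Q$; these eight vectors generate the lattice $\Lambda_{BZ}$ as an abelian group, and the only linear relation among them (up to scaling) is $\hat D_1+\hat D_3+\hat D_5=\hat P+\hat Q$. The group $G_{BZ}$ of all group automorphisms of $\Lambda_{BZ}$ mapping the set of BZ triangles onto itself has order $72$; restriction to the fundamental BZ triangles identifies $G_{BZ}$ with the group of permutations of these eight vectors that map each of $\{\hat C_1,\hat C_2,\hat C_3\}$, $\{\hat D_1,\hat D_3,\hat D_5\}$, $\{\hat P,\hat Q\}$ to itself, so $G_{BZ}\cong\mathfrak{S}_3\times\mathfrak{S}_3\times\mathfrak{S}_2$.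
   Context: A BZ labelling is a vector $(y_1,y_2,y_3,z_1,\dots,z_6)\in\mathbb{R}^9$ satisfying $z_1-z_4=z_5-z_2=z_3-z_6$; these form a 7-dimensional subspace $V_{BZ}\subset\mathbb{R}^9$. Let $\Lambda_{BZ}=V_{BZ}\cap\mathbb{Z}^9$. A BZ triangle ($SU(3)$ Berenstein–Zelevinsky triangle) is an element of $\Lambda_{BZ}$ with all coordinates nonnegative. The fundamental BZ triangles are: $\hat C_i$ ($i=1,2,3$) with $y_i=1$ and all other coordinates $0$; $\hat D_1$ with $z_1=z_4=1$, others $0$; $\hat D_3$ with $z_3=z_6=1$, others $0$; $\hat D_5$ with $z_2=z_5=1$, others $0$; $\hat P$ with $z_1=z_3=z_5=1$, others $0$; $\hat Q$ with $z_2=z_4=z_6=1$, others $0$. *)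

(* Defs.v *)
From HB Require Import structures.
From mathcomp Require Import all_boot all_order all_algebra.
From mathcomp Require Import fingroup perm morphism gproduct.
From mathcomp Require Import ring lra zify.
Set Implicit Arguments. Unset Strict Implicit. Unset Printing Implicit Defensive.
Import Order.TTheory GRing.Theory Num.Theory.
Local Open Scope ring_scope.

(* Coordinates of a vector v : 'rV[R]_9 are ordered
   (y1, y2, y3, z1, z2, z3, z4, z5, z6), i.e. column 0 = y1, ..., column 2 = y3,
   column 3 = z1, column 4 = z2, ..., column 8 = z6. *)

(* BZ labelling condition: z1 - z4 = z5 - z2 = z3 - z6. *)
Definition bzb {R : zmodType} (v : 'rV[R]_9) : bool :=
  (v ord0 (inord 3) - v ord0 (inord 6) == v ord0 (inord 7) - v ord0 (inord 4)) &&
  (v ord0 (inord 7) - v ord0 (inord 4) == v ord0 (inord 5) - v ord0 (inord 8)).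

Definition nonneg {R : numDomainType} (v : 'rV[R]_9) : bool :=
  [forall j, 0 <= v ord0 j].

Definition C_BZ {R : numDomainType} (v : 'rV[R]_9) : Prop := bzb v /\ nonneg v.

Definition extreme_ray {R : numDomainType} (C : 'rV[R]_9 -> Prop) (v : 'rV[R]_9) : Prop :=
  C v /\ v != 0 /\
  forall a b, C a -> C b -> v = a + b -> exists t : R, 0 <= t /\ a = t *: v.

(* The eight fundamental BZ triangles, indexed by 'I_8 in the order
   C1, C2, C3, D1, D3, D5, P, Q. Each is given by its support. *)
Definition fund_support : seq (seq nat) :=
  [:: [:: 0%N]; [:: 1%N]; [:: 2%N];      (* C1 C2 C3 : y_i = 1 *)
      [:: 3%N; 6%N];                      (* D1 : z1 = z4 = 1 *)
      [:: 5%N; 8%N];                      (* D3 : z3 = z6 = 1 *)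
      [:: 4%N; 7%N];                      (* D5 : z2 = z5 = 1 *)
      [:: 3%N; 5%N; 7%N];                 (* P  : z1 = z3 = z5 = 1 *)
      [:: 4%N; 6%N; 8%N] ].               (* Q  : z2 = z4 = z6 = 1 *)

Definition fund {R : nzRingType} (i : 'I_8) : 'rV[R]_9 :=
  \row_(j < 9) (if (nat_of_ord j \in nth [::] fund_support i) then 1 else 0).

(* coefficients of the relation D1 + D3 + D5 - P - Q = 0 *)
Definition rel_coef {R : nzRingType} (i : 'I_8) : R :=
  if (i < 3)%N then 0 else if (i < 6)%N then 1 else -1.

Definition block (i : 'I_8) : nat := if (i < 3)%N then 0 else if (i < 6)%N then 1 else 2.

Definition block_perms : {set {perm 'I_8}} :=
  [set s : {perm 'I_8} | [forall i, block (s i) == block i]].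

Definition bzlab : {pred 'rV[int]_9} := fun v => bzb v.

Lemma bzlab_zmod_closed : zmod_closed bzlab.
Proof.
split; first by rewrite unfold_in /bzlab /bzb /= !mxE !subrr eqxx.
move=> u v; rewrite !unfold_in /bzlab /bzb /= !mxE.
move=> /andP[/eqP h1 /eqP h2] /andP[/eqP h3 /eqP h4].
apply/andP; split; apply/eqP.
- transitivity ((u ord0 (inord 3) - u ord0 (inord 6)) - (v ord0 (inord 3) - v ord0 (inord 6))); first by ring.
  by rewrite h1 h3; ring.
- transitivity ((u ord0 (inord 7) - u ord0 (inord 4)) - (v ord0 (inord 7) - v ord0 (inord 4))); first by ring.
  by rewrite h2 h4; ring.
Qed.
HB.instance Definition _ := GRing.isZmodClosed.Build _ bzlab bzlab_zmod_closed.

Inductive Lam : predArgType := LamSub (v : 'rV[int]_9) of v \in bzlab.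
Definition lamval (x : Lam) : 'rV[int]_9 := let: LamSub v _ := x in v.
HB.instance Definition _ := [isSub of Lam for lamval].
HB.instance Definition _ := [Choice of Lam by <:].
HB.instance Definition _ := [SubChoice_isSubZmodule of Lam by <:].

Definition bz_triangle (x : Lam) : bool := nonneg (val x).

Definition in_G_BZ (f : Lam -> Lam) : Prop :=
  (forall x y, f (x + y) = f x + f y) /\
  bijective f /\
  (forall x, bz_triangle x -> bz_triangle (f x)) /\
  (forall y, bz_triangle y -> exists2 x, bz_triangle x & f x = y).

(* Main.v *)
Require Import Defs.
From HB Require Import structures.
From mathcomp Require Import all_boot all_order all_algebra.
From mathcomp Require Import fingroup perm morphism gproduct.
From mathcomp Require Import ring lra zify.
Set Implicit Arguments. Unset Strict Implicit. Unset Printing Implicit Defensive.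
Import Order.TTheory GRing.Theory Num.Theory.
Local Open Scope ring_scope.

Notation o9 k := (@Ordinal 9 k isT).
Notation o8 k := (@Ordinal 8 k isT).

Definition vec9 {R : zmodType} (a0 a1 a2 a3 a4 a5 a6 a7 a8 : R) : 'rV[R]_9 :=
  \row_(j < 9) nth 0 [:: a0; a1; a2; a3; a4; a5; a6; a7; a8] j.


Lemma vec9_ind (R : zmodType) (P : 'rV[R]_9 -> Prop) :
  (forall a0 a1 a2 a3 a4 a5 a6 a7 a8, P (vec9 a0 a1 a2 a3 a4 a5 a6 a7 a8)) -> forall v, P v.
Proof.
move=> H v; suff -> : v = vec9 (v ord0 (o9 0)) (v ord0 (o9 1)) (v ord0 (o9 2)) (v ord0 (o9 3))
  (v ord0 (o9 4)) (v ord0 (o9 5)) (v ord0 (o9 6)) (v ord0 (o9 7)) (v ord0 (o9 8)) by [].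
apply/rowP => j; rewrite mxE (ord1 ord0).
by case: j => [[|[|[|[|[|[|[|[|[|//]]]]]]]]] p] /=; congr (v _ _); apply: val_inj.
Qed.

Lemma vec9P (R : zmodType) (a0 a1 a2 a3 a4 a5 a6 a7 a8 b0 b1 b2 b3 b4 b5 b6 b7 b8 : R) :
  vec9 a0 a1 a2 a3 a4 a5 a6 a7 a8 = vec9 b0 b1 b2 b3 b4 b5 b6 b7 b8 <->
  [/\ a0 = b0, a1 = b1, a2 = b2, a3 = b3 & [/\ a4 = b4, a5 = b5, a6 = b6, a7 = b7 & a8 = b8]].
Proof.
split.
  move=> E; have F k : (k < 9)%N -> nth 0 [:: a0; a1; a2; a3; a4; a5; a6; a7; a8] k =
     nth 0 [:: b0; b1; b2; b3; b4; b5; b6; b7; b8] k.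
    by move=> kl; have := congr1 (fun v : 'rV[R]_9 => v ord0 (Ordinal kl)) E; rewrite !mxE.
  by split; [exact: (F 0%N)|exact: (F 1%N)|exact: (F 2%N)|exact: (F 3%N)|
    split; [exact: (F 4%N)|exact: (F 5%N)|exact: (F 6%N)|exact: (F 7%N)|exact: (F 8%N)]].
by case=> -> -> -> -> [-> -> -> -> ->].
Qed.

Lemma vec9E (R : zmodType) (a0 a1 a2 a3 a4 a5 a6 a7 a8 : R) (j : 'I_9) :
  vec9 a0 a1 a2 a3 a4 a5 a6 a7 a8 ord0 j = nth 0 [:: a0; a1; a2; a3; a4; a5; a6; a7; a8] j.
Proof. by rewrite mxE. Qed.

Lemma vec9D (R : zmodType) (a0 a1 a2 a3 a4 a5 a6 a7 a8 b0 b1 b2 b3 b4 b5 b6 b7 b8 : R) :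
  vec9 a0 a1 a2 a3 a4 a5 a6 a7 a8 + vec9 b0 b1 b2 b3 b4 b5 b6 b7 b8 =
  vec9 (a0+b0) (a1+b1) (a2+b2) (a3+b3) (a4+b4) (a5+b5) (a6+b6) (a7+b7) (a8+b8).
Proof.
apply/rowP => j; rewrite !mxE.
by case: j => [[|[|[|[|[|[|[|[|[|//]]]]]]]]] p].
Qed.

Lemma vec9N (R : zmodType) (a0 a1 a2 a3 a4 a5 a6 a7 a8 : R) :
  - vec9 a0 a1 a2 a3 a4 a5 a6 a7 a8 = vec9 (-a0) (-a1) (-a2) (-a3) (-a4) (-a5) (-a6) (-a7) (-a8).
Proof.
apply/rowP => j; rewrite !mxE.
by case: j => [[|[|[|[|[|[|[|[|[|//]]]]]]]]] p].
Qed.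

Lemma vec90 (R : zmodType) : 0 = vec9 0 0 0 0 0 0 0 0 0 :> 'rV[R]_9.
Proof.
apply/rowP => j; rewrite !mxE.
by case: j => [[|[|[|[|[|[|[|[|[|//]]]]]]]]] p].
Qed.

Lemma bzb9 (R : zmodType) (a0 a1 a2 a3 a4 a5 a6 a7 a8 : R) :
  bzb (vec9 a0 a1 a2 a3 a4 a5 a6 a7 a8) = (a3 - a6 == a7 - a4) && (a7 - a4 == a5 - a8).
Proof. by rewrite /bzb !mxE !inordK. Qed.



Lemma vec9Z (R : nzRingType) (t a0 a1 a2 a3 a4 a5 a6 a7 a8 : R) :
  t *: vec9 a0 a1 a2 a3 a4 a5 a6 a7 a8 =
  vec9 (t*a0) (t*a1) (t*a2) (t*a3) (t*a4) (t*a5) (t*a6) (t*a7) (t*a8).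
Proof.
apply/rowP => j; rewrite !mxE.
by case: j => [[|[|[|[|[|[|[|[|[|//]]]]]]]]] p].
Qed.

Lemma nonneg9 (R : numDomainType) (a0 a1 a2 a3 a4 a5 a6 a7 a8 : R) :
  nonneg (vec9 a0 a1 a2 a3 a4 a5 a6 a7 a8) <->
  [/\ 0 <= a0, 0 <= a1, 0 <= a2, 0 <= a3 & [/\ 0 <= a4, 0 <= a5, 0 <= a6, 0 <= a7 & 0 <= a8]].
Proof.
split.
  move/forallP => H; have F k : (k < 9)%N -> 0 <= nth 0 [:: a0; a1; a2; a3; a4; a5; a6; a7; a8] k.
    by move=> kl; have := H (Ordinal kl); rewrite mxE.
  by split; [exact: (F 0%N)|exact: (F 1%N)|exact: (F 2%N)|exact: (F 3%N)|
    split; [exact: (F 4%N)|exact: (F 5%N)|exact: (F 6%N)|exact: (F 7%N)|exact: (F 8%N)]].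
case=> h0 h1 h2 h3 [h4 h5 h6 h7 h8]; apply/forallP => j; rewrite mxE.
by case: j => [[|[|[|[|[|[|[|[|[|//]]]]]]]]] p].
Qed.

Lemma fundE (R : nzRingType) :
  [/\ fund (o8 0) = vec9 1 0 0 0 0 0 0 0 0 :> 'rV[R]_9,
      fund (o8 1) = vec9 0 1 0 0 0 0 0 0 0 :> 'rV[R]_9,
      fund (o8 2) = vec9 0 0 1 0 0 0 0 0 0 :> 'rV[R]_9,
      fund (o8 3) = vec9 0 0 0 1 0 0 1 0 0 :> 'rV[R]_9 &
  [/\ fund (o8 4) = vec9 0 0 0 0 0 1 0 0 1 :> 'rV[R]_9,
      fund (o8 5) = vec9 0 0 0 0 1 0 0 1 0 :> 'rV[R]_9,
      fund (o8 6) = vec9 0 0 0 1 0 1 0 1 0 :> 'rV[R]_9 &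
      fund (o8 7) = vec9 0 0 0 0 1 0 1 0 1 :> 'rV[R]_9]].
Proof.
by split; [ | | | | split]; apply/rowP => j; rewrite !mxE;
  case: j => [[|[|[|[|[|[|[|[|[|//]]]]]]]]] p].
Qed.

Lemma sum_fundE (R : comRingType) (e : 'I_8 -> R) :
  \sum_(k < 8) e k *: fund k = vec9 (e (o8 0)) (e (o8 1)) (e (o8 2))
    (e (o8 3) + e (o8 6)) (e (o8 5) + e (o8 7)) (e (o8 4) + e (o8 6))
    (e (o8 3) + e (o8 7)) (e (o8 5) + e (o8 6)) (e (o8 4) + e (o8 7)).
Proof.
rewrite !big_ord_recl big_ord0.
rewrite (_ : lift ord0 ord0 = o8 1); last exact: val_inj.
rewrite (_ : lift ord0 (lift ord0 ord0) = o8 2); last exact: val_inj.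
rewrite (_ : lift ord0 (lift ord0 (lift ord0 ord0)) = o8 3); last exact: val_inj.
rewrite (_ : lift ord0 (lift ord0 (lift ord0 (lift ord0 ord0))) = o8 4); last exact: val_inj.
rewrite (_ : lift ord0 (lift ord0 (lift ord0 (lift ord0 (lift ord0 ord0)))) = o8 5); last exact: val_inj.
rewrite (_ : lift ord0 (lift ord0 (lift ord0 (lift ord0 (lift ord0 (lift ord0 ord0))))) = o8 6); last exact: val_inj.
rewrite (_ : lift ord0 (lift ord0 (lift ord0 (lift ord0 (lift ord0 (lift ord0 (lift ord0 ord0)))))) = o8 7); last exact: val_inj.
rewrite (_ : ord0 = o8 0); last exact: val_inj.
have [F0 F1 F2 F3 [F4 F5 F6 F7]] := fundE R.
rewrite F0 F1 F2 F3 F4 F5 F6 F7 !vec9Z addr0 !vec9D.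
by apply/vec9P; split; [ | | | | split]; ring.

Qed.



Lemma I8_ind (P : 'I_8 -> Prop) : P (o8 0) -> P (o8 1) -> P (o8 2) -> P (o8 3) ->
  P (o8 4) -> P (o8 5) -> P (o8 6) -> P (o8 7) -> forall i, P i.
Proof.
move=> h0 h1 h2 h3 h4 h5 h6 h7 [[|[|[|[|[|[|[|[|//]]]]]]]] p];
 by [rewrite (bool_irrelevance p isT)].
Qed.


Lemma bzbD (R : comRingType) (u v : 'rV[R]_9) : bzb u -> bzb v -> bzb (u + v).
Proof.
elim/vec9_ind: u => a0 a1 a2 a3 a4 a5 a6 a7 a8; elim/vec9_ind: v => b0 b1 b2 b3 b4 b5 b6 b7 b8.
rewrite vec9D !bzb9 => /andP[/eqP h1 /eqP h2] /andP[/eqP h3 /eqP h4].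
apply/andP; split; apply/eqP.
  transitivity ((b3 - b6) + (a3 - a6)); first ring. rewrite h1 h3; ring.
transitivity ((b7 - b4) + (a7 - a4)); first ring. rewrite h2 h4; ring.
Qed.

Lemma bzbZ (R : comRingType) (c : R) (v : 'rV[R]_9) : bzb v -> bzb (c *: v).
Proof.
elim/vec9_ind: v => b0 b1 b2 b3 b4 b5 b6 b7 b8.
rewrite vec9Z !bzb9 => /andP[/eqP h1 /eqP h2].
apply/andP; split; apply/eqP.
  transitivity (c * (b3 - b6)); first ring. rewrite h1; ring.
transitivity (c * (b7 - b4)); first ring. rewrite h2; ring.
Qed.

Lemma bzb0 (R : comRingType) : bzb (0 : 'rV[R]_9).
Proof. by rewrite (vec90 R) bzb9 !subrr eqxx. Qed.

Lemma bzb_fund (R : comRingType) i : bzb (fund i : 'rV[R]_9).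
Proof.
have [F0 F1 F2 F3 [F4 F5 F6 F7]] := fundE R.
by elim/I8_ind: i; rewrite ?F0 ?F1 ?F2 ?F3 ?F4 ?F5 ?F6 ?F7 bzb9; apply/andP; split; apply/eqP; ring.
Qed.

Lemma bzb_sum (R : comRingType) (e : 'I_8 -> R) (h : 'I_8 -> 'I_8) : bzb (\sum_k e k *: fund (h k)).
Proof.
apply: (big_ind (fun v : 'rV[R]_9 => bzb v)); [exact: bzb0|exact: bzbD|].
move=> k _; exact/bzbZ/bzb_fund.
Qed.

Definition pt (i : 'I_8) : 'I_9 := inord (nth 0%N [:: 0; 1; 2; 3; 5; 4; 3; 4]%N i).

Lemma fund_pt (R : comRingType) i : (fund i : 'rV[R]_9) ord0 (pt i) = 1.
Proof. by elim/I8_ind: i; rewrite /pt mxE inordK. Qed.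

Lemma scale_fund_eq0 (R : comRingType) (c : R) k : c *: (fund k : 'rV[R]_9) = 0 -> c = 0.
Proof.
move=> h; have := congr1 (fun v : 'rV[R]_9 => v ord0 (pt k)) h.
by rewrite [in LHS]mxE fund_pt mulr1 => ->; rewrite mxE.
Qed.

Lemma rel_sum (R : comRingType) : \sum_k rel_coef k *: (fund k : 'rV[R]_9) = 0.
Proof.
rewrite sum_fundE /rel_coef /= vec90; apply/vec9P.
by split; [ | | | | split]; ring.
Qed.




Lemma nonnegD (R : realDomainType) (u v : 'rV[R]_9) : nonneg u -> nonneg v -> nonneg (u + v).
Proof.
move=> /forallP hu /forallP hv; apply/forallP => j; rewrite mxE.
exact: addr_ge0.
Qed.

Lemma nonnegZ (R : realDomainType) (c : R) (v : 'rV[R]_9) : 0 <= c -> nonneg v -> nonneg (c *: v).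
Proof.
move=> hc /forallP hv; apply/forallP => j; rewrite mxE.
exact: mulr_ge0.
Qed.

Lemma nonneg0 (R : realDomainType) : nonneg (0 : 'rV[R]_9).
Proof. by apply/forallP => j; rewrite mxE. Qed.

Lemma nonneg_fund (R : realDomainType) i : nonneg (fund i : 'rV[R]_9).
Proof. by apply/forallP => j; rewrite mxE; case: ifP. Qed.

Lemma nonneg_sum (R : realDomainType) (e : 'I_8 -> R) (h : 'I_8 -> 'I_8) : (forall k, 0 <= e k) ->
  nonneg (\sum_k e k *: fund (h k)).
Proof.
move=> he; apply: (big_ind (fun v : 'rV[R]_9 => nonneg v)); [exact: nonneg0|exact: nonnegD|].
move=> k _; exact/nonnegZ/nonneg_fund.
Qed.

Lemma decomp (R : realDomainType) (v : 'rV[R]_9) : bzb v -> nonneg v ->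
  exists e : 'I_8 -> R, (forall k, 0 <= e k) /\ v = \sum_k e k *: fund k.
Proof.
elim/vec9_ind: v => a0 a1 a2 a3 a4 a5 a6 a7 a8.
rewrite bzb9 => /andP[/eqP h1 /eqP h2] /nonneg9 [g0 g1 g2 g3 [g4 g5 g6 g7 g8]].
have [hd|hd] := leP 0 (a3 - a6).
  exists (fun k : 'I_8 => nth 0 [:: a0; a1; a2; a6; a8; a4; a3 - a6; 0] k); split.
    by elim/I8_ind.
  rewrite sum_fundE /=; apply/vec9P; split; [ | | | | split]; lra.
exists (fun k : 'I_8 => nth 0 [:: a0; a1; a2; a3; a5; a7; 0; a6 - a3] k); split.
  by elim/I8_ind => //=; lra.
rewrite sum_fundE /=; apply/vec9P; split; [ | | | | split]; lra.
Qed.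

Lemma relation (R : realDomainType) (c : 'I_8 -> R) :
  \sum_(i < 8) c i *: fund i = 0 <-> exists t : R, forall i, c i = t * rel_coef i.
Proof.
split.
  rewrite sum_fundE vec90 => /vec9P [h0 h1 h2 h3 [h4 h5 h6 h7 h8]].
  exists (c (o8 3)); elim/I8_ind; rewrite /rel_coef /=; lra.
case=> t ht; rewrite (eq_bigr (fun i => t *: (rel_coef i *: fund i))).
  by rewrite -scaler_sumr rel_sum scaler0.
by move=> i _; rewrite ht scalerA.
Qed.

Lemma fund_inj (R : realDomainType) (i j : 'I_8) (t : R) : 0 < t -> fund i = t *: fund j -> i = j.
Proof.
have [F0 F1 F2 F3 [F4 F5 F6 F7]] := fundE R.
move=> ht; elim/I8_ind: i; elim/I8_ind: j => //;
 rewrite ?F0 ?F1 ?F2 ?F3 ?F4 ?F5 ?F6 ?F7 vec9Z => /vec9P; rewrite ?mulr0 ?mulr1;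
 case=> h0 h1 h2 h3 [h4 h5 h6 h7 h8]; clear F0 F1 F2 F3 F4 F5 F6 F7; exfalso; lra.
Qed.

Lemma ss0 (R : realDomainType) (x y : R) : 0 <= x -> 0 <= y -> x + y = 0 -> x = 0.
Proof. move=> hx hy h; lra. Qed.

Lemma ray_fund (R : realDomainType) (a b : 'rV[R]_9) (t : R) i : bzb a -> nonneg a -> bzb b -> nonneg b ->
  a + b = t *: fund i -> a = a ord0 (pt i) *: fund i.
Proof.
have [F0 F1 F2 F3 [F4 F5 F6 F7]] := fundE R.
elim/vec9_ind: a => a0 a1 a2 a3 a4 a5 a6 a7 a8.
elim/vec9_ind: b => b0 b1 b2 b3 b4 b5 b6 b7 b8.
rewrite !bzb9 => /andP[/eqP h1 /eqP h2] /nonneg9 [g0 g1 g2 g3 [g4 g5 g6 g7 g8]].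
move=> /andP[/eqP k1 /eqP k2] /nonneg9 [l0 l1 l2 l3 [l4 l5 l6 l7 l8]].
elim/I8_ind: i; rewrite /pt mxE inordK //=;
 rewrite ?F0 ?F1 ?F2 ?F3 ?F4 ?F5 ?F6 ?F7 !vec9Z vec9D => /vec9P; rewrite ?mulr0 ?mulr1;
 case=> e0 e1 e2 e3 [e4 e5 e6 e7 e8]; clear F0 F1 F2 F3 F4 F5 F6 F7;
 repeat match goal with H : ?x + ?y = 0 |- _ =>
   (have ? : x = 0 by apply: (ss0 (y := y))); clear H end;
 subst; apply/vec9P; rewrite ?mulr0 ?mulr1; (repeat split); first [ done | (clear - h1 h2; lra) | lra ].
Qed.




Lemma split_sum (R : comRingType) (e : 'I_8 -> R) k :
  \sum_j e j *: (fund j : 'rV[R]_9) =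
  e k *: fund k + \sum_j (if j == k then 0 else e j) *: fund j.
Proof.
rewrite (bigD1 k) //= [X in _ = _ + X](bigD1 k) //= eqxx scale0r add0r.
by congr (_ + _); apply: eq_bigr => j /negbTE ->.
Qed.

Lemma pos_coef (R : realDomainType) (e : 'I_8 -> R) (v : 'rV[R]_9) :
  (forall k, 0 <= e k) -> v = \sum_k e k *: fund k -> v != 0 -> exists k, 0 < e k.
Proof.
move=> he ve vnz; case: (pickP (fun k => 0 < e k)) => [k hk|h]; first by exists k.
exfalso; move/eqP: vnz; apply; rewrite ve big1 // => k _.
have : e k = 0 by apply/eqP; rewrite eq_le he andbT leNgt h.
by move=> ->; rewrite scale0r.
Qed.

Lemma part1 (R : realFieldType) (v : 'rV[R]_9) :
  extreme_ray C_BZ v <-> exists i : 'I_8, exists2 t : R, 0 < t & v = t *: fund i.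
Proof.
split.
  case=> [[bv nv] [vnz ext]].
  have [e [he ve]] := decomp bv nv.
  have [k hk] := pos_coef he ve vnz.
  have := ext (e k *: fund k) (\sum_j (if j == k then 0 else e j) *: fund j).
  case.
  - split; first exact/bzbZ/bzb_fund.
    exact/nonnegZ/nonneg_fund/ltW.
  - split; first exact: (bzb_sum _ id).
    apply: (@nonneg_sum R (fun j => if j == k then 0 else e j) id) => j; by case: ifP.
  - by rewrite -split_sum.
  move=> t [t0 E].
  have tn0 : t != 0.
    apply/eqP => t0'; move: E; rewrite t0' scale0r => /scale_fund_eq0 ek0.
    by move: hk; rewrite ek0 ltxx.
  exists k, (t^-1 * e k).
    by rewrite mulr_gt0 // invr_gt0 lt_def tn0.
  by rewrite -scalerA E scalerA mulVf // scale1r.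
case=> i [t t0 ->]; split; [split|split].
- exact/bzbZ/bzb_fund.
- exact/nonnegZ/nonneg_fund/ltW.
- by apply/eqP => h; move: t0; rewrite (scale_fund_eq0 h) ltxx.
move=> a b [ba na] [bb nb] E.
have Ea := ray_fund ba na bb nb (esym E).
exists (a ord0 (pt i) / t); split.
  by apply: divr_ge0; [move/forallP: na; apply | exact: ltW].
by rewrite scalerA divfK ?gt_eqF.
Qed.

Definition bzcoef (v : 'rV[int]_9) (k : 'I_8) : int :=
  nth 0 [:: v ord0 (o9 0); v ord0 (o9 1); v ord0 (o9 2); v ord0 (o9 6); v ord0 (o9 8);
            v ord0 (o9 4); v ord0 (o9 3) - v ord0 (o9 6); 0] k.

Lemma bzcoefE (v : 'rV[int]_9) : bzb v -> v = \sum_k bzcoef v k *: fund k.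
Proof.
elim/vec9_ind: v => a0 a1 a2 a3 a4 a5 a6 a7 a8.
rewrite bzb9 => /andP[/eqP h1 /eqP h2].
rewrite sum_fundE /bzcoef /= !vec9E /=; apply/vec9P; (repeat split); lia.
Qed.


Lemma in_bzlab v : (v \in bzlab) = bzb v.
Proof. by rewrite unfold_in. Qed.

Lemma valD (x y : Lam) : val (x + y) = val x + val y.
Proof. exact: raddfD. Qed.
Lemma val0 : val (0 : Lam) = 0.
Proof. exact: raddf0. Qed.
Lemma valMz (x : Lam) n : val (x *~ n) = val x *~ n.
Proof. exact: raddfMz. Qed.
Lemma val_sum (F : 'I_8 -> Lam) : val (\sum_k F k) = \sum_k val (F k).
Proof. exact: raddf_sum. Qed.

Lemma lf_in i : (fund i : 'rV[int]_9) \in bzlab.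
Proof. by rewrite in_bzlab bzb_fund. Qed.
Definition lf (i : 'I_8) : Lam := Sub (fund i) (lf_in i).
Lemma lfE i : val (lf i) = fund i.
Proof. by rewrite SubK. Qed.

Lemma fund_neq0 (R : comRingType) i : (fund i : 'rV[R]_9) != 0.
Proof.
apply/eqP => h; have : (1 : R) *: fund i = 0 by rewrite scale1r.
by move/scale_fund_eq0/eqP; rewrite oner_eq0.
Qed.

Lemma indec_int (v : 'rV[int]_9) : bzb v -> nonneg v -> v != 0 ->
  (forall a b, bzb a -> nonneg a -> bzb b -> nonneg b -> v = a + b -> a = 0 \/ b = 0) ->
  exists i, v = fund i.
Proof.
move=> bv nv vnz H.
have [e [he ve]] := decomp bv nv.
have [k hk] := pos_coef he ve vnz.
have := H (e k *: fund k) (\sum_j (if j == k then 0 else e j) *: fund j).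
case.
- exact/bzbZ/bzb_fund.
- exact/nonnegZ/nonneg_fund/ltW.
- exact: (bzb_sum _ id).
- by apply: (@nonneg_sum _ (fun j => if j == k then 0 else e j) id) => j; case: ifP.
- by rewrite ve -split_sum.
- by move/scale_fund_eq0 => h; move: hk; rewrite h ltxx.
move=> w0; move: ve; rewrite (split_sum _ k) w0 addr0 => ve.
have := H (fund k) ((e k - 1) *: fund k).
case.
- exact: bzb_fund.
- exact: nonneg_fund.
- exact/bzbZ/bzb_fund.
- by apply/nonnegZ/nonneg_fund; rewrite subr_ge0; lia.
- by rewrite ve scalerBl scale1r addrC subrK.
- by move=> h; move: (fund_neq0 int k); rewrite h eqxx.
move/scale_fund_eq0 => h; exists k; rewrite ve.
have -> : e k = 1 by lia.
by rewrite scale1r.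
Qed.

Lemma fund_indec_int (a b : 'rV[int]_9) i : bzb a -> nonneg a -> bzb b -> nonneg b ->
  fund i = a + b -> a = 0 \/ b = 0.
Proof.
move=> ba na bb nb E.
have Ea := ray_fund ba na bb nb (etrans (esym E) (esym (scale1r _))).
have Eb := ray_fund bb nb ba na (etrans (etrans (addrC b a) (esym E)) (esym (scale1r _))).
have := congr1 (fun v : 'rV[int]_9 => v ord0 (pt i)) E.
rewrite /= [in RHS]mxE (fund_pt int i).
have ha : 0 <= a ord0 (pt i) by move/forallP: na; apply.
have hb : 0 <= b ord0 (pt i) by move/forallP: nb; apply.
move=> h.
have [z|z] : a ord0 (pt i) = 0 \/ b ord0 (pt i) = 0.
  move: ha hb h; move: (a ord0 (pt i)) (b ord0 (pt i)) => x y; lia.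
  by left; rewrite Ea z scale0r.
by right; rewrite Eb z scale0r.
Qed.

Definition indec (x : Lam) : Prop := bz_triangle x /\ x != 0 /\
  forall a b, bz_triangle a -> bz_triangle b -> x = a + b -> a = 0 \/ b = 0.

Lemma valP_bzb (x : Lam) : bzb (val x).
Proof. by rewrite -in_bzlab; exact: valP. Qed.

Lemma neq0_val (x : Lam) : (x != 0) = (val x != 0).
Proof. by rewrite -val0 (inj_eq val_inj). Qed.

Lemma indecP x : indec x <-> exists i, val x = fund i.
Proof.
split.
  case=> [tx [xnz H]]; apply: indec_int.
  - exact: valP_bzb.
  - exact: tx.
  - by rewrite -neq0_val.
  move=> a b ba na bb nb E.
  have ia : a \in bzlab by rewrite in_bzlab.
  have ib : b \in bzlab by rewrite in_bzlab.
  have := H (Sub a ia) (Sub b ib).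
  rewrite /bz_triangle !SubK => /(_ na nb).
  case.
  - by apply: val_inj; rewrite valD !SubK.
  - by move/(congr1 val); rewrite SubK val0; left.
  - by move/(congr1 val); rewrite SubK val0; right.
case=> i xi; split; [|split].
- by rewrite /bz_triangle xi nonneg_fund.
- by rewrite neq0_val xi fund_neq0.
move=> a b ta tb E.
have [h|h] : val a = 0 \/ val b = 0.
  by apply: (@fund_indec_int (val a) (val b) i (valP_bzb a) ta (valP_bzb b) tb); rewrite -xi E valD.
  by left; apply: val_inj; rewrite h val0.
by right; apply: val_inj; rewrite h val0.
Qed.


Definition fsn (k j : nat) : nat := (j \in nth [::] fund_support k).
Definition chk (a b c d e : nat) : bool :=
 ~~ (uniq [:: a; b; c; d; e] && all (fun j => fsn a j + fsn b j + fsn c j == fsn d j + fsn e j) (iota 0 9))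
 || [&& (3 <= a < 6), (3 <= b < 6), (3 <= c < 6), 6 <= d & 6 <= e]%N.
Lemma check : all (fun a => all (fun b => all (fun c => all (fun d => all (fun e => chk a b c d e)
  (iota 0 8)) (iota 0 8)) (iota 0 8)) (iota 0 8)) (iota 0 8).
Proof. vm_compute. reflexivity. Qed.

Lemma fund_fsn (k : 'I_8) (j : 'I_9) : (fund k : 'rV[int]_9) ord0 j = (fsn k j)%:Z.
Proof. by rewrite mxE /fsn; case: ifP. Qed.

Lemma addf0 (f : Lam -> Lam) : (forall x y, f (x + y) = f x + f y) -> f 0 = 0.
Proof. by move=> fD; apply: (addrI (f 0)); rewrite -fD !addr0. Qed.

Lemma addfN (f : Lam -> Lam) : (forall x y, f (x + y) = f x + f y) -> forall x, f (- x) = - f x.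
Proof.
by move=> fD x; apply: (addIr (f x)); rewrite -fD !addNr (addf0 fD).
Qed.

Lemma addfMz (f : Lam -> Lam) : (forall x y, f (x + y) = f x + f y) ->
  forall x n, f (x *~ n) = f x *~ n.
Proof.
move=> fD x n.
have hn m : f (x *+ m) = f x *+ m.
  by elim: m => [|m IH]; rewrite ?mulr0n ?(addf0 fD) // !mulrS fD IH.
case: n => m; first exact: hn.
by rewrite !NegzE !mulrNz (addfN fD) hn.
Qed.

Lemma addf_sum (f : Lam -> Lam) : (forall x y, f (x + y) = f x + f y) ->
  forall F : 'I_8 -> Lam, f (\sum_k F k) = \sum_k f (F k).
Proof. by move=> fD F; apply: (big_morph f fD (addf0 fD)). Qed.

Lemma lam_gen (x : Lam) : x = \sum_k lf k *~ bzcoef (val x) k.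
Proof.
apply: val_inj; rewrite val_sum {1}(bzcoefE (valP_bzb x)).
by apply: eq_bigr => k _; rewrite valMz lfE -scaler_int intz.
Qed.

Lemma G_indec f x : in_G_BZ f -> indec x -> indec (f x).
Proof.
case=> fD [[g fg gf] [fT fS]] [tx [xnz H]]; split; [exact: fT|split].
  apply: contra xnz => /eqP fx0; apply/eqP.
  by rewrite -(fg x) fx0 -{1}(addf0 fD) fg.
move=> a b ta tb E.
have [a' ta' fa] := fS a ta; have [b' tb' fb] := fS b tb.
have E' : x = a' + b' by rewrite -(fg x) E -fa -fb -fD fg.
case: (H a' b' ta' tb' E') => h; [left; rewrite -fa h | right; rewrite -fb h]; exact: addf0.
Qed.

Lemma G_fund f i : in_G_BZ f -> exists j, val (f (lf i)) = fund j.
Proof. by move=> hf; apply/indecP/G_indec => //; apply/indecP; exists i; exact: lfE. Qed.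

Definition sfun (f : Lam -> Lam) (i : 'I_8) : 'I_8 := odflt i [pick j | val (f (lf i)) == fund j].

Lemma sfunP f i : in_G_BZ f -> val (f (lf i)) = fund (sfun f i).
Proof.
move=> hf; rewrite /sfun; case: pickP => [j /eqP //|H].
by have [j hj] := G_fund i hf; move: (H j); rewrite hj eqxx.
Qed.

Lemma lf_inj : injective lf.
Proof.
move=> i j /(congr1 val); rewrite !lfE => h.
by apply: (@fund_inj int i j 1) => //; rewrite scale1r.
Qed.

Lemma sfun_inj f : in_G_BZ f -> injective (sfun f).
Proof.
move=> hf i j e.
have : val (f (lf i)) = val (f (lf j)) by rewrite !sfunP // e.
move/val_inj; case: hf => _ [[g fg _] _] h.
by apply: lf_inj; rewrite -(fg (lf i)) h fg.
Qed.

Lemma addmxE (A B : 'rV[int]_9) j : (A + B) ord0 j = A ord0 j + B ord0 j.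
Proof. by rewrite mxE. Qed.

Lemma perm_block (s : {perm 'I_8}) :
  (fund (s (o8 3)) + fund (s (o8 4)) + fund (s (o8 5)) =
   fund (s (o8 6)) + fund (s (o8 7)) :> 'rV[int]_9) ->
  s \in block_perms.
Proof.
move=> E.
have M (x : 'I_8) : (nat_of_ord x \in iota 0 8) by rewrite mem_iota add0n ltn_ord.
have := check => /allP/(_ _ (M (s (o8 3))))/allP/(_ _ (M (s (o8 4))))/allP/(_ _ (M (s (o8 5))))
  /allP/(_ _ (M (s (o8 6))))/allP/(_ _ (M (s (o8 7)))).
rewrite /chk; case/orP => [/negP[]|].
  apply/andP; split.
    have U : uniq [seq nat_of_ord (s x) | x <- [:: o8 3; o8 4; o8 5; o8 6; o8 7]].
      by rewrite map_inj_uniq // => x y /val_inj/perm_inj.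
    exact: U.
  apply/allP => j; rewrite mem_iota => /andP[_ hj].
  have := congr1 (fun v : 'rV[int]_9 => v ord0 (Ordinal hj)) E.
  by rewrite /= !addmxE !fund_fsn -!PoszD => -[h]; apply/eqP; exact: h.
case/and5P => /andP[a3 a6] /andP[b3 b6] /andP[c3 c6] d6 e6.
have D (i k : 'I_8) : i != k -> nat_of_ord (s i) != nat_of_ord (s k).
  by move=> ik; apply: contra ik => /eqP/val_inj/perm_inj ->.
have L (i : 'I_8) : (nat_of_ord (s i) < 8)%N by [].
have D3 := D _ _ (isT : o8 3 != o8 4).
have D4 := D _ _ (isT : o8 3 != o8 5).
have D5 := D _ _ (isT : o8 4 != o8 5).
have D6 := D _ _ (isT : o8 6 != o8 7).
have L6 := L (o8 6); have L7 := L (o8 7).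
have L0 := L (o8 0); have L1 := L (o8 1); have L2 := L (o8 2).
rewrite inE; apply/forallP; elim/I8_ind; rewrite /block /=.
- have := D _ _ (isT : o8 0 != o8 3); have := D _ _ (isT : o8 0 != o8 4);
  have := D _ _ (isT : o8 0 != o8 5); have := D _ _ (isT : o8 0 != o8 6);
  have := D _ _ (isT : o8 0 != o8 7).
  by move=> *; case: ltnP => ?; [|case: ltnP => ?]; rewrite ?eqxx //; exfalso; clear E M D L; lia.
- have := D _ _ (isT : o8 1 != o8 3); have := D _ _ (isT : o8 1 != o8 4);
  have := D _ _ (isT : o8 1 != o8 5); have := D _ _ (isT : o8 1 != o8 6);
  have := D _ _ (isT : o8 1 != o8 7).
  by move=> *; case: ltnP => ?; [|case: ltnP => ?]; rewrite ?eqxx //; exfalso; clear E M D L; lia.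
- have := D _ _ (isT : o8 2 != o8 3); have := D _ _ (isT : o8 2 != o8 4);
  have := D _ _ (isT : o8 2 != o8 5); have := D _ _ (isT : o8 2 != o8 6);
  have := D _ _ (isT : o8 2 != o8 7).
  by move=> *; case: ltnP => ?; [|case: ltnP => ?]; rewrite ?eqxx //; exfalso; clear E M D L; lia.
all: by move=> *; case: ltnP => ?; [|case: ltnP => ?]; rewrite ?eqxx //; exfalso; clear E M D L; lia.
Qed.


Lemma part6 f : in_G_BZ f -> exists2 s : {perm 'I_8}, s \in block_perms &
  forall (x : Lam) (i : 'I_8), val x = fund i -> val (f x) = fund (s i).
Proof.
move=> hf; exists (perm (sfun_inj hf)).
  apply: perm_block; rewrite !permE -!sfunP //.
  have rel : lf (o8 3) + lf (o8 4) + lf (o8 5) = lf (o8 6) + lf (o8 7).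
    apply: val_inj; rewrite !valD !lfE.
    have [F0 F1 F2 F3 [F4 F5 F6 F7]] := fundE int.
    rewrite F3 F4 F5 F6 F7 !vec9D; apply/vec9P; (repeat split); lia.
  case: (hf) => fD _.
  by have := congr1 (fun x => val (f x)) rel; rewrite /= !fD !valD.
move=> x i xi; have -> : x = lf i by apply: val_inj; rewrite lfE.
by rewrite sfunP // permE.
Qed.

Lemma part8 f g : in_G_BZ f -> in_G_BZ g ->
  (forall (x : Lam) (i : 'I_8), val x = fund i -> f x = g x) -> f =1 g.
Proof.
move=> [fD _] [gD _] H x; rewrite (lam_gen x) !addf_sum //; apply: eq_bigr => k _.
by rewrite !addfMz // (H (lf k) k (lfE k)).
Qed.

Lemma reindex_perm (s : {perm 'I_8}) (F : 'I_8 -> 'rV[int]_9) :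
  \sum_k F (s k) = \sum_k F k.
Proof. exact: (esym (reindex_inj (h := s) (P := predT) (F := F) perm_inj)). Qed.

Lemma sum_delta (G : 'I_8 -> 'rV[int]_9) i : \sum_k (k == i)%:R *: G k = G i.
Proof.
rewrite (bigD1 i) //= eqxx scale1r big1 ?addr0 // => k /negbTE ->.
by rewrite scale0r.
Qed.

Definition Fv (s : {perm 'I_8}) (v : 'rV[int]_9) : 'rV[int]_9 :=
  \sum_k bzcoef v k *: fund (s k).
Lemma Fv_in s v : Fv s v \in bzlab.
Proof. by rewrite in_bzlab; exact: bzb_sum. Qed.
Definition FL s (x : Lam) : Lam := Sub (Fv s (val x)) (Fv_in s (val x)).
Lemma FLE s x : val (FL s x) = Fv s (val x).
Proof. by rewrite SubK. Qed.

Lemma rel_perm s : s \in block_perms -> forall k, rel_coef (s k) = rel_coef k :> int.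
Proof.
rewrite inE => /forallP H k; move: (H k); rewrite /rel_coef /block.
by do 4 case: ifP => _ //.
Qed.

Lemma block_inv s : s \in block_perms -> (s^-1)%g \in block_perms.
Proof.
rewrite !inE => /forallP H; apply/forallP => i.
by have := H ((s^-1)%g i); rewrite permKV eq_sym.
Qed.

Lemma Fsum s (e : 'I_8 -> int) : s \in block_perms ->
  Fv s (\sum_k e k *: fund k) = \sum_k e k *: fund (s k).
Proof.
move=> bs; set v := \sum_k e k *: fund k.
have bv : bzb v by exact: (bzb_sum e id).
have : \sum_k (e k - bzcoef v k) *: (fund k : 'rV[int]_9) = 0.
  under eq_bigr do rewrite scalerBl.
  by rewrite sumrB -(bzcoefE bv) subrr.
move/relation => [t ht].
have Z : \sum_k (e k - bzcoef v k) *: (fund (s k) : 'rV[int]_9) = 0.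
  rewrite (eq_bigr (fun k => t *: (rel_coef (s k) *: fund (s k)))); last first.
    by move=> k _; rewrite ht rel_perm // scalerA.
  by rewrite -scaler_sumr (reindex_perm s (fun k => rel_coef k *: fund k)) rel_sum scaler0.
apply/eqP; rewrite -subr_eq0 /Fv -sumrB -oppr_eq0 -sumrN; apply/eqP; rewrite -[RHS]Z.
by apply: eq_bigr => k _; rewrite opprB scalerBl.
Qed.

Lemma Fcomp s t v : t \in block_perms ->
  Fv t (Fv s v) = \sum_k bzcoef v k *: fund (t (s k)).
Proof.
move=> bt.
have E1 : Fv s v = \sum_k bzcoef v ((s^-1)%g k) *: fund k.
  rewrite -(reindex_perm s (fun k => bzcoef v ((s^-1)%g k) *: fund k)).
  by apply: eq_bigr => k _; rewrite permK.
rewrite E1 Fsum //.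
rewrite -(reindex_perm s (fun k => bzcoef v ((s^-1)%g k) *: fund (t k))).
by apply: eq_bigr => k _; rewrite permK.
Qed.

Lemma FL_inv s : s \in block_perms -> cancel (FL s) (FL (s^-1)%g).
Proof.
move=> bs x; apply: val_inj; rewrite !FLE Fcomp ?block_inv //.
rewrite [RHS](bzcoefE (valP_bzb x)).
by apply: eq_bigr => k _; rewrite permK.
Qed.

Lemma FL_triangle s x : s \in block_perms -> bz_triangle x -> bz_triangle (FL s x).
Proof.
move=> bs tx; have [e [he ve]] := decomp (valP_bzb x) tx.
by rewrite /bz_triangle FLE ve Fsum //; apply: nonneg_sum.
Qed.

Lemma part7 s : s \in block_perms -> exists2 f : Lam -> Lam, in_G_BZ f &
  forall (x : Lam) (i : 'I_8), val x = fund i -> val (f x) = fund (s i).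
Proof.
move=> bs; have bi := block_inv bs.
exists (FL s); last first.
  move=> x i xi; rewrite FLE xi -{1}(sum_delta (fun k => fund k) i) Fsum //.
  exact: (sum_delta (fun k => fund (s k)) i).
split; [|split; [|split]].
- move=> x y; apply: val_inj; rewrite valD !FLE valD.
  rewrite {1}(bzcoefE (valP_bzb x)) {1}(bzcoefE (valP_bzb y)) -big_split /=.
  under eq_bigr do rewrite -scalerDl.
  rewrite Fsum // /Fv -big_split /=.
  by apply: eq_bigr => k _; rewrite scalerDl.
- exists (FL (s^-1)%g); first exact: FL_inv.
  by move=> x; have := FL_inv bi x; rewrite invgK.
- by move=> x; apply: FL_triangle.
move=> y ty; exists (FL (s^-1)%g y); first exact: FL_triangle.
by have := FL_inv bi y; rewrite invgK.
Qed.

Local Close Scope ring_scope.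


Definition PT := ({perm 'I_3} * {perm 'I_3} * {perm 'I_2})%type.

Definition psi_fun (x : PT) (i : 'I_8) : 'I_8 :=
  if (i < 3)%N then inord (x.1.1 (inord i))
  else if (i < 6)%N then inord (3 + x.1.2 (inord (i - 3)))
  else inord (6 + x.2 (inord (i - 6))).

Lemma psi_fun_val x i : nat_of_ord (psi_fun x i) =
  if (i < 3)%N then nat_of_ord (x.1.1 (inord i))
  else if (i < 6)%N then 3 + x.1.2 (inord (i - 3))
  else 6 + x.2 (inord (i - 6)).
Proof.
rewrite /psi_fun; case: ifP => _; [|case: ifP => _]; rewrite inordK //.
- by have := ltn_ord (x.1.1 (inord i)); lia.
- by have := ltn_ord (x.1.2 (inord (i - 3))); lia.
- by have := ltn_ord (x.2 (inord (i - 6))); lia.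
Qed.

Lemma inord_val' n m (a : 'I_n.+1) : (n <= m)%N -> inord (nat_of_ord (inord a : 'I_m.+1)) = a.
Proof.
move=> h; rewrite inordK; first exact: inord_val.
by have := ltn_ord a; lia.
Qed.

Lemma psi_funM x y i : psi_fun (x * y)%g i = psi_fun y (psi_fun x i).
Proof.
case: x => [[p1 q1] r1]; case: y => [[p2 q2] r2].
apply: ord_inj; rewrite !psi_fun_val /=.
have li := ltn_ord i.
case: (ltnP i 3) => h3.
  have := ltn_ord (p1 (inord i)); move=> hx.
  by rewrite hx permM inord_val.
case: (ltnP i 6) => h6.
  have := ltn_ord (q1 (inord (i - 3))) => hx.
  have -> : (3 + q1 (inord (i - 3)) < 3) = false by apply/negbTE; lia.
  have -> : (3 + q1 (inord (i - 3)) < 6) by lia.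
  by rewrite addKn inord_val permM.
have := ltn_ord (r1 (inord (i - 6))) => hx.
have -> : (6 + r1 (inord (i - 6)) < 3) = false by apply/negbTE; lia.
have -> : (6 + r1 (inord (i - 6)) < 6) = false by apply/negbTE; lia.
by rewrite addKn inord_val permM.
Qed.

Lemma psi_fun1 i : psi_fun 1%g i = i.
Proof.
apply: ord_inj; rewrite psi_fun_val /=; have li := ltn_ord i.
case: ltnP => h3; [|case: ltnP => h6]; rewrite perm1 inordK; lia.
Qed.

Lemma psi_inj x : injective (psi_fun x).
Proof.
apply: (can_inj (g := psi_fun (x^-1)%g)) => i.
by rewrite -psi_funM mulgV psi_fun1.
Qed.

Definition psi (x : PT) : {perm 'I_8} := perm (@psi_inj x).

Lemma psiM : {in [set: PT] &, {morph psi : x y / (x * y)%g}}.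
Proof. by move=> x y _ _; apply/permP => i; rewrite permM !permE psi_funM. Qed.

Canonical psi_morph := Morphism psiM.

Lemma psi_injm : ('injm psi_morph)%g.
Proof.
apply/injmP => -[[p1 q1] r1] [[p2 q2] r2] _ _ E.
have V (i : 'I_8) : nat_of_ord (psi_fun (p1, q1, r1) i) = psi_fun (p2, q2, r2) i.
  by have := congr1 (fun s : {perm 'I_8} => nat_of_ord (s i)) E; rewrite /= !permE.
have P1 : p1 = p2.
  apply/permP => a; apply: ord_inj; have := V (inord a); rewrite !psi_fun_val /=.
  have ha := ltn_ord a; rewrite inordK ?ha ?inord_val //; lia.
have Q1 : q1 = q2.
  apply/permP => a; apply: ord_inj; have := V (inord (3 + a)); rewrite !psi_fun_val /=.
  have ha := ltn_ord a; rewrite inordK; last by lia.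
  have -> : (3 + a < 3) = false by apply/negbTE; lia.
  have -> : (3 + a < 6) by lia.
  rewrite addKn inord_val; lia.
have R1 : r1 = r2.
  apply/permP => a; apply: ord_inj; have := V (inord (6 + a)); rewrite !psi_fun_val /=.
  have ha := ltn_ord a; rewrite inordK; last by lia.
  have -> : (6 + a < 3) = false by apply/negbTE; lia.
  have -> : (6 + a < 6) = false by apply/negbTE; lia.
  rewrite addKn inord_val; lia.
by rewrite P1 Q1 R1.
Qed.

Lemma blockP (i j : 'I_8) : block i = block j -> ((i < 3) = (j < 3)) /\ ((i < 6) = (j < 6)).
Proof.
rewrite /block.
case: (ltnP i 3) => a; case: (ltnP j 3) => b; case: (ltnP i 6) => c; case: (ltnP j 6) => d //= E;
  try (split; reflexivity); exfalso; lia.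
Qed.

Lemma psi_block x : psi x \in block_perms.
Proof.
rewrite inE; apply/forallP => i; apply/eqP; rewrite permE.
case: x => [[p q] r].
rewrite /block psi_fun_val /=; have li := ltn_ord i.
case: (ltnP i 3) => h3.
  by have := ltn_ord (p (inord i)) => ->.
case: (ltnP i 6) => h6.
  have := ltn_ord (q (inord (i - 3))) => hx.
  have -> : (3 + q (inord (i - 3)) < 3) = false by apply/negbTE; lia.
  by have -> : (3 + q (inord (i - 3)) < 6) by lia.
have := ltn_ord (r (inord (i - 6))) => hx.
have -> : (6 + r (inord (i - 6)) < 3) = false by apply/negbTE; lia.
by have -> : (6 + r (inord (i - 6)) < 6) = false by apply/negbTE; lia.
Qed.

Lemma block_psi s : s \in block_perms -> exists x, psi x = s.
Proof.
rewrite inE => /forallP H.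
have B i : ((s i < 3) = (i < 3)) /\ ((s i < 6) = (i < 6)) by apply: blockP; apply/eqP.
have pinj : injective (fun a : 'I_3 => inord (s (inord a : 'I_8)) : 'I_3).
  move=> a b E; have ha := ltn_ord a; have hb := ltn_ord b.
  have [Ba _] := B (inord a); have [Bb _] := B (inord b).
  rewrite inordK in Ba; last by lia. rewrite inordK in Bb; last by lia.
  move/(congr1 val): E => /=; rewrite inordK; last by rewrite Ba.
  rewrite inordK; last by rewrite Bb.
  move/ord_inj/perm_inj/(congr1 val) => /=; rewrite !inordK; [exact: ord_inj|lia|lia].
have qinj : injective (fun a : 'I_3 => inord (s (inord (3 + a) : 'I_8) - 3) : 'I_3).
  move=> a b E; have ha := ltn_ord a; have hb := ltn_ord b.
  have [Ba Ba'] := B (inord (3 + a)); have [Bb Bb'] := B (inord (3 + b)).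
  rewrite inordK in Ba Ba'; try lia. rewrite inordK in Bb Bb'; try lia.
  have la := ltn_ord (s (inord (3 + a))); have lb := ltn_ord (s (inord (3 + b))).
  move/(congr1 val): E => /=; rewrite inordK; last by move: Ba Ba'; case: ltnP; case: ltnP => //; lia.
  rewrite inordK; last by move: Bb Bb'; case: ltnP; case: ltnP => //; lia.
  move=> E.
  have E' : nat_of_ord (s (inord (3 + a))) = s (inord (3 + b)).
    by move: Ba Ba' Bb Bb' E; case: ltnP; case: ltnP; case: ltnP; case: ltnP => //; lia.
  move/ord_inj/perm_inj/(congr1 val): E' => /=; rewrite !inordK; [|lia|lia].
  move=> h; apply: ord_inj; lia.
have rinj : injective (fun a : 'I_2 => inord (s (inord (6 + a) : 'I_8) - 6) : 'I_2).
  move=> a b E; have ha := ltn_ord a; have hb := ltn_ord b.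
  have [Ba Ba'] := B (inord (6 + a)); have [Bb Bb'] := B (inord (6 + b)).
  rewrite inordK in Ba Ba'; try lia. rewrite inordK in Bb Bb'; try lia.
  have la := ltn_ord (s (inord (6 + a))); have lb := ltn_ord (s (inord (6 + b))).
  move/(congr1 val): E => /=; rewrite inordK; last by move: Ba Ba'; case: ltnP; case: ltnP => //; lia.
  rewrite inordK; last by move: Bb Bb'; case: ltnP; case: ltnP => //; lia.
  move=> E.
  have E' : nat_of_ord (s (inord (6 + a))) = s (inord (6 + b)).
    by move: Ba Ba' Bb Bb' E; case: ltnP; case: ltnP; case: ltnP; case: ltnP => //; lia.
  move/ord_inj/perm_inj/(congr1 val): E' => /=; rewrite !inordK; [|lia|lia].
  move=> h; apply: ord_inj; lia.
exists (perm pinj, perm qinj, perm rinj); apply/permP => i; rewrite permE.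
apply: ord_inj; rewrite psi_fun_val /= !permE.
have li := ltn_ord i; have ls := ltn_ord (s i); have [Bi Bi'] := B i.
case: (ltnP i 3) => h3.
  have s3 : s i < 3 by rewrite Bi.
  have e1 : (inord (nat_of_ord (inord i : 'I_3)) : 'I_8) = i.
    by apply: ord_inj; rewrite !inordK; lia.
  by rewrite e1 inordK.
have s3 : 3 <= s i by rewrite leqNgt Bi -leqNgt.
case: (ltnP i 6) => h6.
  have s6 : s i < 6 by rewrite Bi'.
  have e1 : (inord (3 + nat_of_ord (inord (i - 3) : 'I_3)) : 'I_8) = i.
    by apply: ord_inj; rewrite !inordK; lia.
  by rewrite e1 inordK; lia.
have s6 : 6 <= s i by rewrite leqNgt Bi' -leqNgt.
have e1 : (inord (6 + nat_of_ord (inord (i - 6) : 'I_2)) : 'I_8) = i.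
  by apply: ord_inj; rewrite !inordK; lia.
by rewrite e1 inordK; lia.
Qed.

Lemma block_image : block_perms = (psi_morph @* [set: PT])%g.
Proof.
rewrite morphimEdom; apply/setP => s; apply/idP/imsetP.
  by case/block_psi => x <-; exists x.
by case=> x _ ->; exact: psi_block.
Qed.

Lemma part9 : #|block_perms| = 72%N /\ block_perms \isog [set: ({perm 'I_3} * {perm 'I_3} * {perm 'I_2})%type].
Proof.
have iso : [set: PT] \isog (psi_morph @* [set: PT])%g := sub_isog (subxx _) psi_injm.
rewrite block_image; split; last by rewrite isog_sym.
have c3 : #|{perm 'I_3}| = 3`! := card_Sn 3.
have c2 : #|{perm 'I_2}| = 2`! := card_Sn 2.
by rewrite -(card_isog iso) cardsT !card_prod c3 c2.
Qed.

Local Open Scope ring_scope.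

Theorem mainTheorem2 (R : realFieldType) :
  (* the extreme rays of C_BZ are exactly the rays spanned by the eight fundamental triangles *)
  (forall v : 'rV[R]_9,
      extreme_ray C_BZ v <-> exists i : 'I_8, exists2 t : R, 0 < t & v = t *: fund i) /\
  (* ... and these eight rays are pairwise distinct (exactly eight extreme rays) *)
  (forall (i j : 'I_8) (t : R), 0 < t -> fund i = t *: fund j -> i = j) /\
  (* the fundamental BZ triangles are BZ triangles *)
  (forall i : 'I_8, bzb (fund (R := int) i) && nonneg (fund (R := int) i)) /\
  (* they generate Lambda_BZ as an abelian group *)
  (forall v : 'rV[int]_9, bzb v ->
      exists c : 'I_8 -> int, v = \sum_(i < 8) c i *: fund i) /\
  (* the only linear relation, up to scaling, is D1 + D3 + D5 = P + Q *)
  (forall c : 'I_8 -> R,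
      \sum_(i < 8) c i *: fund i = 0 <-> exists t : R, forall i, c i = t * rel_coef i) /\
  (* restriction to the fundamental triangles: G_BZ -> block-preserving permutations *)
  (forall f : Lam -> Lam, in_G_BZ f ->
      exists2 s : {perm 'I_8}, s \in block_perms &
        forall (x : Lam) (i : 'I_8), val x = fund i -> val (f x) = fund (s i)) /\
  (* ... is surjective *)
  (forall s : {perm 'I_8}, s \in block_perms ->
      exists2 f : Lam -> Lam, in_G_BZ f &
        forall (x : Lam) (i : 'I_8), val x = fund i -> val (f x) = fund (s i)) /\
  (* ... and injective *)
  (forall f g : Lam -> Lam, in_G_BZ f -> in_G_BZ g ->
      (forall (x : Lam) (i : 'I_8), val x = fund i -> f x = g x) -> f =1 g) /\
  (* hence |G_BZ| = 72 and G_BZ is isomorphic to S3 x S3 x S2 *)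
  #|block_perms| = 72%N /\
  block_perms \isog [set: ({perm 'I_3} * {perm 'I_3} * {perm 'I_2})%type].
Proof.
split; first exact: part1.
split; first exact: fund_inj.
split; first by move=> i; rewrite bzb_fund nonneg_fund.
split; first by move=> v bv; exists (bzcoef v); exact: bzcoefE.
split; first exact: relation.
split; first exact: part6.
split; first exact: part7.
split; first exact: part8.
exact: part9.
Qed.
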